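(* Let $n_0\ge1$, $m\ge0$, $\epsilon>0$, and $g\in C^m(B_{n_0}(\epsilon))$. Define $h$ on $B_{n_0}(\epsilon)$, in polar coordinates $u=r\omega$ ($r\ge0$, $\omega\in S^{n_0-1}$), by $$h(r\omega)=\begin{cases}\frac1r\int_0^rg(s\omega)\,ds,& r\ne0,\\ g(0),& r=0.\end{cases}$$ Then $h\in C^m(B_{n_0}(\epsilon))$, and for every multi-index $\alpha$ with $|\alpha|\le m$, $$(\partial_u^\alpha h)(r\omega)=\begin{cases}\frac1{r^{|\alpha|+1}}\int_0^rs^{|\alpha|}(\partial_u^\alpha g)(s\omega)\,ds,& r\ne0,\\ \frac1{|\alpha|+1}(\partial^\alpha_ug)(0),& r=0.\end{cases}$$
   Context: $B_{n_0}(\epsilon)$ denotes the open Euclidean ball of radius $\epsilon$ centered at $0$ in $\mathbb R^{n_0}$. *)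

(* Defs.v *)
From HB Require Import structures.
From mathcomp Require Import all_boot all_order all_algebra.
From mathcomp Require Import all_classical all_reals all_analysis.
Unset Printing Implicit Defensive.
Import Order.TTheory GRing.Theory Num.Theory.
Import numFieldNormedType.Exports.
Local Open Scope classical_set_scope.
Local Open Scope ring_scope.

Definition enorm {R : realType} {n : nat} (u : 'rV[R]_n) : R :=
  Num.sqrt (\sum_(i < n) (u ord0 i) ^+ 2).

Definition eball0 {R : realType} (n : nat) (eps : R) : set 'rV[R]_n :=
  [set u | enorm u < eps].

Definition ebasis {R : realType} {n : nat} (i : 'I_n) : 'rV[R]_n :=
  delta_mx ord0 i.

Definition partial {R : realType} {n : nat} (i : 'I_n)
  (f : 'rV[R]_n -> R) : 'rV[R]_n -> R :=
  fun x => 'D_(ebasis i) f x.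

Definition Dseq {R : realType} {n : nat} (s : seq 'I_n)
  (f : 'rV[R]_n -> R) : 'rV[R]_n -> R :=
  foldr (fun i g => partial i g) f s.

Definition mindex (n : nat) := 'I_n -> nat.
Definition mabs {n : nat} (a : mindex n) : nat := (\sum_(i < n) a i)%N.

Definition Dalpha {R : realType} {n : nat} (a : mindex n)
  (f : 'rV[R]_n -> R) : 'rV[R]_n -> R :=
  Dseq (flatten [seq nseq (a i) i | i <- enum 'I_n]) f.

Definition Cm {R : realType} {n : nat} (m : nat) (U : set 'rV[R]_n)
  (f : 'rV[R]_n -> R) : Prop :=
  forall s : seq 'I_n, (size s <= m)%N ->
    (forall x, U x -> {for x, continuous (Dseq s f)}) /\
    ((size s < m)%N -> forall (i : 'I_n) x, U x ->
        derivable (Dseq s f) x (ebasis i)).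

Definition int0 {R : realType} (r : R) (f : R -> R) : R :=
  Rintegral (@lebesgue_measure R) `[0, r] f.

Definition radial_avg {R : realType} {n : nat} (g : 'rV[R]_n -> R)
  (u : 'rV[R]_n) : R :=
  let r := enorm u in
  if r != 0 then r^-1 * int0 r (fun s => g (s *: (r^-1 *: u)))
  else g 0.

(* Main.v *)
Require Import Defs.
From HB Require Import structures.
From mathcomp Require Import all_boot all_order all_algebra.
From mathcomp Require Import all_classical all_reals all_analysis.
Import Order.TTheory GRing.Theory Num.Theory.
Import numFieldNormedType.Exports.
Local Open Scope classical_set_scope.
Local Open Scope ring_scope.

Section enorm.
Context {R : realType} {n : nat}.
Implicit Types (u y : 'rV[R]_n).

Lemma enorm_ge0 u : 0 <= enorm u.
Proof. exact: sqrtr_ge0. Qed.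

Lemma enormZ (t : R) u : enorm (t *: u) = `|t| * enorm u.
Proof.
rewrite /enorm.
under eq_bigr do rewrite mxE exprMn.
by rewrite -mulr_sumr sqrtrM ?sqrtr_sqr // sqr_ge0.
Qed.

Lemma coord_le_enorm u i : `|u ord0 i| <= enorm u.
Proof.
rewrite /enorm -sqrtr_sqr ler_sqrt; last by apply: sumr_ge0 => j _; exact: sqr_ge0.
rewrite (bigD1 i) //= lerDl; apply: sumr_ge0 => j _; exact: sqr_ge0.
Qed.

Lemma enorm0P u : enorm u = 0 -> u = 0.
Proof.
move=> h; apply/matrixP => a i; rewrite (ord1 a) mxE.
by apply/eqP; rewrite -normr_le0 -h coord_le_enorm.
Qed.

Lemma enorm0 : enorm (0 : 'rV[R]_n) = 0.
Proof. by rewrite -(scale0r 0) enormZ normr0 mul0r. Qed.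

Lemma mxnorm_le_enorm u : `|u| <= enorm u.
Proof.
rewrite [leLHS]/Num.Def.normr /= mx_normrE; apply/bigmax_leP; split; first exact: enorm_ge0.
by move=> [a i] _ /=; rewrite (ord1 a); exact: coord_le_enorm.
Qed.

Lemma enorm_continuous : continuous (@enorm R n).
Proof.
move=> x.
have -> : @enorm R n = Num.sqrt \o (fun y : 'rV[R]_n => \sum_(i < n) (y ord0 i) ^+ 2).
  by apply/funext.
apply: continuous_comp; last exact: sqrt_continuous.
apply: continuous_big => [|i _]; first exact: add_continuous.
move=> y; apply: (@continuous_comp _ _ _ (fun y : 'rV[R]_n => y ord0 i) (fun r : R => r ^+ 2)).
  exact: coord_continuous.
exact: exprn_continuous.
Qed.

End enorm.

Section ball.
Context {R : realType} {n : nat}.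

Lemma enorm_near (y : 'rV[R]_n) (e : R) : enorm y < e -> \forall z \near y, enorm z < e.
Proof. move=> h; exact: (cvgr_lt (enorm y) (enorm_continuous y) _ h). Qed.

Definition cball (rho : R) : set 'rV[R]_n := [set y | enorm y <= rho].

Lemma cball_compact rho : compact (cball rho).
Proof.
apply: bounded_closed_compact.
  exists rho; split; first exact: num_real.
  move=> M hM y /= hy; apply: le_trans (mxnorm_le_enorm y) _.
  exact: le_trans hy (ltW hM).
have -> : cball rho = enorm @^-1` [set x | x <= rho] by [].
apply: preimage_closed; last exact: closed_le.
by move=> y _; exact: enorm_continuous.
Qed.

Lemma ltrDl_ok (M : R) : M < M + 1. Proof. by rewrite ltrDl. Qed.

Lemma cont_bounded (G : 'rV[R]_n -> R) (eps rho : R) :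
  (forall x, eball0 n eps x -> {for x, continuous G}) -> rho < eps ->
  exists M, forall y, enorm y <= rho -> `|G y| <= M.
Proof.
move=> cG re.
have cK : {within cball rho, continuous G}.
  apply: continuous_in_subspaceT => x; rewrite inE => hx; apply: cG.
  exact: le_lt_trans hx re.
have /compact_bounded [M [_ hM]] := continuous_compact cK (cball_compact rho).
exists (M + 1) => y hy.
have := hM (M + 1) (ltrDl_ok M) (G y) (ex_intro2 _ _ y hy erefl).
by [].
Qed.

End ball.

Section seqcont.
Context {R : realType} {n : nat}.

Lemma seq_cont (f : 'rV[R]_n -> R) (p : 'rV[R]_n) (l : R) :
  (forall w : nat -> 'rV[R]_n, w k @[k --> \oo] --> p -> f (w k) @[k --> \oo] --> l) ->
  f y @[y --> p] --> l.
Proof.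
move=> H; apply: contrapT => nc.
have [e e0 he] : exists2 e : R, 0 < e & forall d, 0 < d ->
    exists y, `|p - y| < d /\ ~ (`|l - f y| < e).
  apply: contrapT => nex; apply: nc; apply/(cvgrPdist_lt (FF := nbhs_filter p)) => e e0.
  apply: contrapT => nnear; apply: nex; exists e => // d d0.
  apply: contrapT => nall; apply: nnear; apply/nbhs_ballP; exists d => //= y.
  rewrite -ball_normE /= => pyd; apply: contrapT => nly; apply: nall.
  by exists y.
have hw : forall k : nat, exists y, `|p - y| < k.+1%:R^-1 /\ ~ (`|l - f y| < e).
  by move=> k; apply: he.
have [w hw'] := choice hw.
have : f (w k) @[k --> \oo] --> l.
  apply: H; apply/cvgrPdist_lt => r r0.
  near=> k; apply: lt_trans (hw' k).1 _.
  by near: k; exact: (near_infty_natSinv_lt (PosNum r0)).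
move=> /cvgrPdist_lt /(_ e e0) [N _ hN].
by apply: (hw' N).2; apply: hN => /=.
Unshelve. all: by end_near. Qed.

End seqcont.

Section dct.
Context {R : realType}.
Local Notation mu := (@lebesgue_measure R).

Lemma cont_int01 (f : R -> R) : {within `[0, 1], continuous f} ->
  mu.-integrable `[0, 1] (EFin \o f).
Proof. by move=> cf; apply: continuous_compact_integrable => //; exact: segment_compact. Qed.

Lemma dct01 (f_ : nat -> R -> R) (f : R -> R) (M : R) :
  (forall k, {within `[0, 1], continuous f_ k}) -> {within `[0, 1], continuous f} ->
  (forall t, 0 <= t <= 1 -> f_ ^~ t @ \oo --> f t) ->
  (forall k t, 0 <= t <= 1 -> `|f_ k t| <= M) ->
  int0 1 (f_ k) @[k --> \oo] --> int0 1 f.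
Proof.
move=> cf_ cf ff bM.
have iF := @cont_int01 f cf.
rewrite /int0.
have -> : (fun k => Rintegral mu `[0, 1] (f_ k)) = fine \o (fun k => (\int[mu]_(x in `[0%R, 1%R]) (f_ k x)%:E)%E) by [].
apply: fine_cvg; rewrite /Rintegral fineK; last exact: integrable_fin_num.
apply: (@dominated_cvg _ _ _ mu _ (measurable_itv _) (fun k x => (f_ k x)%:E) _ (EFin \o cst M)).
- move=> k; by have /integrableP[] := @cont_int01 (f_ k) (cf_ k).
- move=> x /= /[1!in_itv] /= hx; apply: cvg_EFin; first exact: nearW.
  exact: ff.
- by [].
- by apply: (@cont_int01 (cst M)); exact: cst_continuous.
- move=> k x /= hx; rewrite lee_fin; apply: bM.
  by move: hx; rewrite in_itv.
Qed.

End dct.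

Section avg.
Context {R : realType} {n : nat}.

Definition avgk (k : nat) (G : 'rV[R]_n -> R) (y : 'rV[R]_n) : R :=
  int0 1 (fun t => t ^+ k * G (t *: y)).

Lemma enormZ_le (t : R) (y : 'rV[R]_n) : 0 <= t <= 1 -> enorm (t *: y) <= enorm y.
Proof.
move=> /andP[t0 t1]; rewrite enormZ ger0_norm //.
by rewrite ler_piMl // enorm_ge0.
Qed.

Lemma integrand_cont (G : 'rV[R]_n -> R) eps k y :
  (forall x, eball0 n eps x -> {for x, continuous G}) -> enorm y < eps ->
  {within `[0, 1], continuous (fun t : R => t ^+ k * G (t *: y))}.
Proof.
move=> cG hy; apply: continuous_in_subspaceT => t; rewrite inE /= in_itv /= => ht.
apply: cvgM; first exact: exprn_continuous.
apply: (continuous_comp (f := fun t : R => t *: y) (g := G)).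
  by apply: cvgZ; [exact: cvg_id | exact: cvg_cst].
apply: cG; rewrite /eball0 /=; exact: le_lt_trans (enormZ_le t y ht) hy.
Qed.

Lemma pow_le1 (t : R) k : 0 <= t <= 1 -> `|t ^+ k| <= 1.
Proof.
move=> /andP[t0 t1]; rewrite normrX ger0_norm //; exact: exprn_ile1.
Qed.

Lemma avgk_cont (G : 'rV[R]_n -> R) eps k u :
  (forall x, eball0 n eps x -> {for x, continuous G}) -> enorm u < eps ->
  {for u, continuous (avgk k G)}.
Proof.
move=> cG hu.
pose rho := (enorm u + eps) / 2.
have hur : enorm u < rho by rewrite /rho midf_lt.
have hre : rho < eps by rewrite /rho midf_lt.
have [M hM] := cont_bounded G eps rho cG hre.
apply: seq_cont => w wu.
have ew : enorm (w k) @[k --> \oo] --> enorm u := cvg_comp _ _ wu (enorm_continuous u).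
have [N _ hN] := cvgr_lt (enorm u) ew rho hur.
have hwN : forall j, enorm (w (j + N)%N) < rho by move=> j; apply: hN => /=; rewrite leq_addl.
rewrite -(cvg_shiftn N).
apply: (@dct01 R (fun j t => t ^+ k * G (t *: w (j + N)%N)) _ M).
- move=> j; apply: (integrand_cont G eps k _ cG); exact: lt_trans (hwN j) hre.
- exact: integrand_cont G eps k u cG hu.
- move=> t ht; apply: cvgM; first exact: cvg_cst.
  have hs : t *: w (j + N)%N @[j --> \oo] --> t *: u.
    by apply: cvgZ; [exact: cvg_cst| rewrite (cvg_shiftn N w)].
  apply: cvg_comp hs _.
  apply: cG; rewrite /eball0 /=; exact: le_lt_trans (enormZ_le t u ht) hu.
- move=> j t ht; rewrite normrM.
  have h1 := pow_le1 t k ht.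
  have h2 : `|G (t *: w (j + N)%N)| <= M.
    apply: hM; apply: le_trans (enormZ_le t (w (j + N)%N) ht) _; exact: ltW.
  apply: le_trans (ler_piMl _ h1) h2 => //.
Qed.

End avg.

Section linederiv.
Context {R : realType} {n : nat}.

Lemma derive1P' (G : 'rV[R]_n -> R) (P w : 'rV[R]_n) :
  'D_w G P = 'D_1 (fun s : R => G (s *: w + P)) 0.
Proof.
rewrite /derive; set g1 := fun h => h^-1 *: _; set g2 := fun h => h^-1 *: _.
suff -> : g1 = g2 by [].
by rewrite funeqE /g1 /g2 => h /=; rewrite addr0 scale0r add0r [_%:A]mulr1.
Qed.

Lemma lin_is_derive (x t : R) : is_derive x 1 (fun x' : R => (x' - x) * t) t.
Proof.
apply: trigger_derive; rewrite subrr scaler0 add0r subr0; exact: mulr1.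
Qed.

Lemma line_derive (G : 'rV[R]_n -> R) (w P : 'rV[R]_n) (x t : R) :
  derivable G P w ->
  is_derive x 1 (fun x' : R => G (((x' - x) * t) *: w + P)) (t * 'D_w G P).
Proof.
move=> dG.
have d1 : is_derive ((fun x' : R => (x' - x) * t) x) 1 (fun s : R => G (s *: w + P)) ('D_w G P).
  rewrite /= subrr mul0r; apply: DeriveDef.
    exact: (proj1 (derivable1P G P w) dG).
  by rewrite derive1P'.
have := @is_derive1_comp R (fun s : R => G (s *: w + P)) (fun x' : R => (x' - x) * t) x _ _ d1 (lin_is_derive x t).
by rewrite mulrC.
Qed.

End linederiv.

Section avgderiv.
Context {R : realType} {n : nat}.
Local Notation mu := (@lebesgue_measure R).

Lemma vec_alg (x x' t : R) (e u : 'rV[R]_n) :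
  t *: (x' *: e + u) = ((x' - x) * t) *: e + t *: (x *: e + u).
Proof.
rewrite !scalerDr !scalerA addrA -scalerDl; congr (_ *: _ + _).
by rewrite mulrBl mulrC (mulrC x t) subrK.
Qed.

Lemma avgk_deriv (G : 'rV[R]_n -> R) eps k u (i : 'I_n) :
  (forall x, eball0 n eps x -> {for x, continuous G}) ->
  (forall x, eball0 n eps x -> derivable G x (ebasis i)) ->
  (forall x, eball0 n eps x -> {for x, continuous (partial i G)}) ->
  enorm u < eps ->
  derivable (avgk k G) u (ebasis i) /\
  'D_(ebasis i) (avgk k G) u = avgk k.+1 (partial i G) u.
Proof.
move=> cG dG cP hu.
pose rho := (enorm u + eps) / 2.
have hur : enorm u < rho by rewrite /rho midf_lt.
have hre : rho < eps by rewrite /rho midf_lt.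
have [M hM] := cont_bounded (partial i G) eps rho cP hre.
have M0 : 0 <= M.
  apply: le_trans (normr_ge0 _) (hM 0 _); rewrite enorm0; exact: le_trans (enorm_ge0 u) (ltW hur).
pose e : 'rV[R]_n := ebasis i.
have c1 : (x *: e + u) @[x --> (0:R)] --> 0 *: e + u.
  apply: cvgD; last exact: cvg_cst.
  by apply: cvgZ; [exact: cvg_id | exact: cvg_cst].
rewrite scale0r add0r in c1.
have c2 : enorm (x *: e + u) @[x --> (0:R)] --> enorm u := cvg_comp _ _ c1 (enorm_continuous u).
have [del del0 hdel] : nbhs_ball (0:R) [set x : R | enorm (x *: e + u) < rho].
  apply/nbhs_ballP; exact: (cvgr_lt (enorm u) c2 rho hur).
have hI : forall x : R, `](- del), del[%classic x -> enorm (x *: e + u) < rho.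
  move=> x; rewrite /= in_itv /= => hx; apply: hdel.
  by rewrite -ball_normE /= sub0r normrN ltr_norml.
have I0 : `](- del), del[%classic (0:R) by rewrite /= in_itv /= oppr_lt0 del0.
pose f := fun (x : R) (t : R) => t ^+ k * G (t *: (x *: e + u)).
have hball : forall x t : R, `](- del), del[%classic x -> 0 <= t <= 1 ->
    enorm (t *: (x *: e + u)) <= rho.
  by move=> x t hx ht; apply: le_trans (enormZ_le t _ ht) (ltW (hI x hx)).
have isd : forall x t : R, `](- del), del[%classic x -> 0 <= t <= 1 ->
    is_derive x 1 (f ^~ t) (t ^+ k * (t * partial i G (t *: (x *: e + u)))).
  move=> x t hx ht.
  have -> : f ^~ t = t ^+ k \*: (fun x' : R => G (((x' - x) * t) *: e + t *: (x *: e + u))).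
    by apply/funext => x' /=; rewrite /f (vec_alg x).
  apply: is_deriveZ; apply: line_derive; apply: dG.
  rewrite /eball0 /=; exact: le_lt_trans (hball x t hx ht) hre.
have intf : forall x : R, `](- del), del[%classic x -> mu.-integrable `[0, 1] (EFin \o f x).
  move=> x hx; apply: cont_int01; apply: (integrand_cont G eps k _ cG).
  exact: lt_trans (hI x hx) hre.
have derf1 : forall (x : R) (t : R), `](- del), del[%classic x -> `[0, 1]%classic t -> derivable (f ^~ t) x 1.
  move=> x t hx; rewrite /= in_itv /= => ht; by case: (isd x t hx ht).
have d1f : forall (x : R) (t : R), `](- del), del[%classic x -> `[0, 1]%classic t ->
    partial1of2 f x t = t ^+ k * (t * partial i G (t *: (x *: e + u))).
  move=> x t hx; rewrite /= in_itv /= => ht.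
  by rewrite partial1of2E; case: (isd x t hx ht).
have Gub : forall (x : R) (t : R), `](- del), del[%classic x -> `[0, 1]%classic t -> `|partial1of2 f x t| <= cst M t.
  move=> x t hx ht; rewrite d1f //; move: ht; rewrite /= in_itv /= => ht.
  rewrite normrM normrM.
  have h1 := pow_le1 t k ht.
  have h2 : `|t| <= 1 by case/andP: ht => t0 t1; rewrite ger0_norm.
  have h3 := hM _ (hball x t hx ht).
  apply: le_trans (ler_piMl _ h1) _ => //.
  exact: le_trans (ler_piMl _ h2) h3.
have icst : mu.-integrable `[0, 1] (EFin \o cst M).
  by apply: (@cont_int01 R (cst M)); exact: cst_continuous.
have der := @derivable_under_integral R _ _ mu f `[0, 1] (measurable_itv _) 0 (- del) del I0 intf derf1 (cst M) (fun _ => M0) icst Gub.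
have dval := @differentiation_under_integral R _ _ mu f `[0, 1] (measurable_itv _) 0 (- del) del I0 intf derf1 (cst M) (fun _ => M0) icst Gub.
split.
  by apply/derivable1P.
rewrite derive1P' -derive1E.
have -> : (fun s : R => avgk k G (s *: ebasis i + u)) = (fun x' => \int[mu]_(y in `[0, 1]) f x' y) by [].
rewrite dval /avgk /int0; apply: eq_Rintegral => t ht.
rewrite d1f //; last by rewrite inE in ht.
by rewrite scale0r add0r mulrA -exprSr.
Qed.

End avgderiv.

Section scaling.
Context {R : realType}.
Local Notation mu := (@lebesgue_measure R).

Lemma scale_is_derive (r x : R) : is_derive x 1 (fun x : R => r * x) r.
Proof. by apply: trigger_derive; rewrite [_%:A]mulr1. Qed.

Lemma int0_scale (r : R) (f : R -> R) : 0 < r ->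
  (forall s, 0 <= s <= r -> {for s, continuous f}) ->
  int0 r f = r * int0 1 (fun t => f (r * t)).
Proof.
move=> r0 cf.
pose F := fun x : R => r * x.
have dF : derive1 F = cst r.
  apply/funext => x; rewrite derive1E; exact: (@derive_val _ _ _ _ _ _ _ (scale_is_derive r x)).
have cF : continuous F.
  move=> x; apply: cvgM; [exact: cvg_cst | exact: cvg_id].
have he : (\int[mu]_(x in `[0%R, r]) (f x)%:E)%E =
    (\int[mu]_(x in `[0%R, 1%R]) (((f \o F) * derive1 F) x)%:E)%E.
  have := @integration_by_substitution_increasing R F f 0 1 ler01.
  rewrite /F mulr0 mulr1; apply.
  - by move=> x y _ _ xy; rewrite ltr_pM2l.
  - by rewrite dF => x _; exact: cst_continuous.
  - by rewrite dF; exact: is_cvg_cst.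
  - by rewrite dF; exact: is_cvg_cst.
  - split.
    + by move=> x _; case: (scale_is_derive r x).
    + exact: cvg_at_right_filter (cF 0).
    + exact: cvg_at_left_filter (cF 1).
  - apply: continuous_in_subspaceT => x.
    by rewrite inE /= in_itv /=; exact: cf.
rewrite /int0 /Rintegral he.
transitivity (fine (\int[mu]_(x in `[0%R, 1%R]) (f (r * x) * r)%:E)%E).
  congr fine; apply: eq_integral => x _ /=.
  congr (_%:E); change (f (r * x) * (derive1 F) x = f (r * x) * r).
  by rewrite dF.
rewrite -[X in X = _]/(Rintegral mu `[0, 1] (fun x => f (r * x) * r)).
rewrite RintegralZr //; first exact: mulrC.
apply: cont_int01; apply: continuous_in_subspaceT => x; rewrite inE /= in_itv /= => /andP[x0 x1].
apply: (continuous_comp (f := fun x : R => r * x) (g := f)); first exact: cF.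
by apply: cf; apply/andP; split; [exact: mulr_ge0 (ltW r0) x0 | exact: ler_piMr (ltW r0) x1].
Qed.

End scaling.

Section final.
Context {R : realType} {n : nat}.
Local Notation mu := (@lebesgue_measure R).

Lemma int_pow (k : nat) : int0 1 (fun t : R => t ^+ k) = (k.+1%:R)^-1.
Proof.
pose F := fun t : R => (k.+1%:R)^-1 * t ^+ k.+1.
have dF : forall x : R, is_derive x 1 F (x ^+ k).
  move=> x.
  have hX := @is_deriveX R R (@id R) k.+1 x 1 1 (is_derive_id x 1).
  rewrite exprfctE /= in hX.
  have hZ := @is_deriveZ R R R (fun t : R => t ^+ k.+1) (k.+1%:R^-1) x 1 _ hX.
  have -> : F = (k.+1%:R^-1) \*: (fun t : R => t ^+ k.+1) by [].
  apply: (trigger_derive hZ).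
  change (k.+1%:R^-1 * ((k.+1%:R * x ^+ k) * 1) = x ^+ k).
  by rewrite mulr1 mulrA mulVf ?mul1r // pnatr_eq0.
have cF : continuous F.
  move=> x; apply: cvgM; first exact: cvg_cst.
  exact: exprn_continuous.
have := @continuous_FTC2 R (fun t => t ^+ k) F 0 1 ltr01 _ _ _.
rewrite /int0 /Rintegral => ->.
- by rewrite /F /= expr1n mulr1 expr0n /= mulr0 subr0.
- by apply: continuous_in_subspaceT => x _; exact: exprn_continuous.
- split.
  + by move=> x _; case: (dF x).
  + exact: cvg_at_right_filter (cF 0).
  + exact: cvg_at_left_filter (cF 1).
- by move=> x _; rewrite derive1E; case: (dF x).
Qed.

Lemma avgk_zero (G : 'rV[R]_n -> R) k : avgk k G 0 = (k.+1%:R)^-1 * G 0.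
Proof.
rewrite /avgk.
have -> : (fun t : R => t ^+ k * G (t *: 0)) = (fun t => t ^+ k * G 0).
  by apply/funext => t; rewrite scaler0.
have ip := int_pow k; rewrite /int0 in ip.
rewrite /int0 RintegralZr //; first by rewrite ip.
apply: cont_int01; apply: continuous_in_subspaceT => x _; exact: exprn_continuous.
Qed.

Lemma integrand_cont_at (G : 'rV[R]_n -> R) eps k (y : 'rV[R]_n) (t : R) :
  (forall x, eball0 n eps x -> {for x, continuous G}) -> enorm (t *: y) < eps ->
  {for t, continuous (fun t : R => t ^+ k * G (t *: y))}.
Proof.
move=> cG hy.
apply: cvgM; first exact: exprn_continuous.
apply: (continuous_comp (f := fun t : R => t *: y) (g := G)).
  by apply: cvgZ; [exact: cvg_id | exact: cvg_cst].
exact: cG.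
Qed.

Lemma avgk_polar (G : 'rV[R]_n -> R) eps k (y : 'rV[R]_n) :
  (forall x, eball0 n eps x -> {for x, continuous G}) -> enorm y < eps ->
  enorm y != 0 ->
  int0 (enorm y) (fun s => s ^+ k * G (s *: ((enorm y)^-1 *: y))) =
  enorm y ^+ k.+1 * avgk k G y.
Proof.
move=> cG hy ny0.
set r := enorm y.
have r0 : 0 < r by rewrite lt0r ny0 enorm_ge0.
rewrite int0_scale //; last first.
  move=> s /andP[s0 sr]; apply: (integrand_cont_at G eps k _ s cG).
  rewrite enormZ enormZ ger0_norm // ger0_norm ?invr_ge0 ?enorm_ge0 //.
  rewrite mulrA -/r mulfVK ?(gt_eqF r0) //; exact: le_lt_trans sr hy.
rewrite /avgk /int0.
have -> : Rintegral mu `[0, 1] (fun t => (r * t) ^+ k * G ((r * t) *: (r^-1 *: y))) =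
    Rintegral mu `[0, 1] (fun t => r ^+ k * (t ^+ k * G (t *: y))).
  apply: eq_Rintegral => t _; rewrite exprMn -mulrA; congr (_ * (_ * G _)).
  by rewrite scalerA mulrAC mulfV ?(gt_eqF r0) // mul1r.
rewrite RintegralZl //; last first.
  apply: cont_int01; exact: (integrand_cont G eps k y cG hy).
by rewrite exprS mulrA.
Qed.

Lemma size_alpha (a : mindex n) :
  size (flatten [seq nseq (a i) i | i <- enum 'I_n]) = mabs a.
Proof.
rewrite size_flatten /shape -map_comp sumnE big_map /mabs.
rewrite -[RHS]big_enum /=.
by apply: eq_bigr => i _; rewrite /= size_nseq.
Qed.

End final.

Section main.
Context {R : realType} {n : nat}.

Lemma near_cont (f g : 'rV[R]_n -> R) (x : 'rV[R]_n) :
  {near x, g =1 f} -> {for x, continuous g} -> {for x, continuous f}.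
Proof.
move=> hfg cg.
have e : g x = f x := nbhs_singleton hfg.
have cg' : g @ x --> f x by rewrite -e; exact: cg.
exact: cvg_trans (near_eq_cvg hfg) cg'.
Qed.

Lemma base_eq (g : 'rV[R]_n -> R) eps (y : 'rV[R]_n) :
  (forall x, eball0 n eps x -> {for x, continuous g}) -> enorm y < eps ->
  radial_avg g y = avgk 0 g y.
Proof.
move=> cg hy; rewrite /radial_avg.
case: ifPn => [ny0|].
  have := avgk_polar g eps 0 y cg hy ny0.
  have -> : (fun s : R => s ^+ 0 * g (s *: ((enorm y)^-1 *: y))) =
     (fun s => g (s *: ((enorm y)^-1 *: y))) by apply/funext => s; rewrite mul1r.
  move=> ->; rewrite expr1 mulKf //.
rewrite negbK => /eqP /enorm0P ->.
by rewrite avgk_zero invr1 mul1r.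
Qed.

Lemma Dseq_eq (g : 'rV[R]_n -> R) m eps :
  Cm m (eball0 n eps) g ->
  forall s : seq 'I_n, (size s <= m)%N -> forall y, enorm y < eps ->
    Dseq s (radial_avg g) y = avgk (size s) (Dseq s g) y.
Proof.
move=> Cg; elim => [|i s IH] hs y hy.
  by apply: (base_eq g eps y) => // x hx; case: (Cg [::] isT) => c _; exact: c.
have hs' : (size s < m)%N by [].
have near_e : \forall z \near y, Dseq s (radial_avg g) z = avgk (size s) (Dseq s g) z.
  near=> z; apply: IH; [exact: ltnW | near: z; exact: enorm_near].
rewrite /= /partial (near_eq_derive _ near_e).
have [cS dS] := Cg s (ltnW hs').
have [cP _] := Cg (i :: s) hs.
have [_ ->] := avgk_deriv (Dseq s g) eps (size s) y i cS (dS hs' i) cP hy.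
by [].
Unshelve. all: by end_near. Qed.

End main.

Theorem lemma3p11 (R : realType) (n0 m : nat) (eps : R)
  (g : 'rV[R]_n0 -> R) :
  (1 <= n0)%N -> 0 < eps -> Cm m (eball0 n0 eps) g ->
  Cm m (eball0 n0 eps) (radial_avg g) /\
  forall a : mindex n0, (mabs a <= m)%N ->
    forall u : 'rV[R]_n0, eball0 n0 eps u ->
      Dalpha a (radial_avg g) u =
        (let r := enorm u in
         if r != 0 then
           (r ^+ (mabs a).+1)^-1 *
             int0 r (fun s => s ^+ mabs a * Dalpha a g (s *: (r^-1 *: u)))
         else ((mabs a).+1%:R)^-1 * Dalpha a g 0).
Proof.
move=> _ _ Cg.
have nearE : forall s : seq 'I_n0, (size s <= m)%N -> forall x, eball0 n0 eps x ->
    \forall z \near x, avgk (size s) (Dseq s g) z = Dseq s (radial_avg g) z.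
  move=> s hs x hx; near=> z; apply/esym; apply: (Dseq_eq g m eps Cg s hs).
  near: z; exact: enorm_near.
split.
  move=> s hs; split.
    move=> x hx; apply: near_cont (nearE s hs x hx) _.
    by have [c _] := Cg s hs; exact: (avgk_cont (Dseq s g) eps (size s) x c hx).
  move=> hs' i x hx; apply: near_eq_derivable (nearE s hs x hx) _.
  have [c d] := Cg s hs; have [cP _] := Cg (i :: s) hs'.
  by have [] := avgk_deriv (Dseq s g) eps (size s) x i c (d hs' i) cP hx.
move=> a ha u hu.
rewrite /Dalpha (Dseq_eq g m eps Cg _ _ u hu) ?size_alpha //= .
have hsz : (size (flatten [seq nseq (a i) i | i <- enum 'I_n0]) <= m)%N by rewrite size_alpha.
have [c _] := Cg _ hsz.
case: ifPn => [ny0|].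
  rewrite (avgk_polar _ eps _ u c hu ny0) mulKf //.
  by rewrite expf_neq0.
rewrite negbK => /eqP /enorm0P ->.
by rewrite avgk_zero.
Unshelve. all: by end_near. Qed.
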